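(* Let $f_1,\dots,f_n\colon\mathbb R\to\mathbb R$ and $\eta\colon\mathbb R\times\mathbb R\to(0,\infty)$ be smooth with $\eta(x,0)=1$, and consider the metric $(\star)$ on $\mathbb R^{n+2}$, whose scalar curvature is $\mathrm{Scal}(x,u)=-2\eta_{uu}(x,u)/\eta(x,u)$. Let $k_\gamma(x)=-\eta_u(x,0)$. If $\mathrm{Scal}<0$ everywhere, $|k_\gamma(x)|\le\sqrt{\tfrac12|\mathrm{Scal}(x,u)|}$ for all $x,u$, and $|k_\gamma(x)|\le\Lambda$ for all $x$ and some constant $\Lambda$, then the metric is complete.
   Context: The metric $(\star)$: on $\mathbb R\times\mathbb R^{n+1}$ with coordinates $(x,u,v_1,\dots,v_n)$, conventions $v_0=u$, $v_{-1}=v_{n+1}=0$, $f_0=f_{n+1}=0$, $g_{\eta,f}=\eta(x,u)^2dx^2+\sum_{j=0}^n\big(dv_j+(v_{j-1}f_j(x)-v_{j+1}f_{j+1}(x))dx\big)^2$. $k_\gamma$ is the geodesic curvature of the curve $\gamma(x)=(x,0,\dots,0)$. *)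

(* Defs.v *)
From Stdlib Require Import Reals.
From Coquelicot Require Import Coquelicot.
Open Scope R_scope.

Definition smooth1 (g : R -> R) : Prop := forall (k : nat) (x : R), ex_derive_n g k x.

Definition smooth2 (h : R -> R -> R) : Prop :=
  exists D : nat -> nat -> R -> R -> R,
    (forall x u, D 0%nat 0%nat x u = h x u) /\
    (forall i j x u, is_derive (fun y => D i j y u) x (D (S i) j x u)) /\
    (forall i j x u, is_derive (fun w => D i j x w) u (D i (S j) x u)) /\
    (forall i j x u, continuous (fun p : R * R => D i j (fst p) (snd p)) (x, u)).

Definition eta_u (eta : R -> R -> R) (x u : R) : R := Derive (fun w => eta x w) u.
Definition eta_uu (eta : R -> R -> R) (x u : R) : R := Derive (fun w => eta_u eta x w) u.

(* scalar curvature of the metric (star), as given by the stated formula *)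
Definition Scal (eta : R -> R -> R) (x u : R) : R := - 2 * eta_uu eta x u / eta x u.

(* geodesic curvature of gamma(x) = (x,0,...,0), as given *)
Definition k_gamma (eta : R -> R -> R) (x : R) : R := - eta_u eta x 0.

(* f_j extended by the conventions f_0 = f_{n+1} = 0 (only 1 <= j <= n used) *)
Definition fext (n : nat) (f : nat -> R -> R) (j : nat) : R -> R :=
  if andb (Nat.leb 1 j) (Nat.leb j n) then f j else fun _ => 0.

(* A point of R x R^{n+1}: (x, v) with v 0 = u, v j = v_j for 1 <= j <= n;
   coordinates v j with j > n are irrelevant. *)
Definition point : Type := (R * (nat -> R))%type.

Record curve : Type := mkCurve { cx : R -> R ; cv : nat -> R -> R }.

(* g_{eta,f}(c'(t), c'(t)) *)
Definition speed2 (n : nat) (f : nat -> R -> R) (eta : R -> R -> R) (c : curve) (t : R) : R :=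
  (eta (cx c t) (cv c 0%nat t))^2 * (Derive (cx c) t)^2
  + sum_f_R0 (fun j =>
      (Derive (cv c j) t
       + (cv c (j - 1)%nat t * fext n f j (cx c t)
          - cv c (S j) t * fext n f (S j) (cx c t)) * Derive (cx c) t)^2) n.

(* C^1 curves (parametrized on [0,1], given as C^1 maps on R) *)
Definition C1 (g : R -> R) : Prop :=
  (forall t, ex_derive g t) /\ (forall t, continuous (Derive g) t).

Definition admissible (n : nat) (c : curve) : Prop :=
  C1 (cx c) /\ forall j, (j <= n)%nat -> C1 (cv c j).

Definition joins (n : nat) (c : curve) (p q : point) : Prop :=
  cx c 0 = fst p /\ cx c 1 = fst q /\
  forall j, (j <= n)%nat -> cv c j 0 = snd p j /\ cv c j 1 = snd q j.

Definition curve_length (n : nat) (f : nat -> R -> R) (eta : R -> R -> R) (c : curve) : R :=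
  RInt (fun t => sqrt (speed2 n f eta c t)) 0 1.

(* d(p,q) < eps for the Riemannian distance d (infimum of lengths of curves) *)
Definition dist_lt (n : nat) (f : nat -> R -> R) (eta : R -> R -> R) (p q : point) (eps : R) : Prop :=
  exists c, admissible n c /\ joins n c p q /\ curve_length n f eta c < eps.

Definition metric_complete (n : nat) (f : nat -> R -> R) (eta : R -> R -> R) : Prop :=
  forall s : nat -> point,
    (forall eps, 0 < eps -> exists N : nat, forall k m : nat, (N <= k)%nat -> (N <= m)%nat ->
        dist_lt n f eta (s k) (s m) eps) ->
    exists p : point, forall eps, 0 < eps -> exists N : nat, forall k : nat, (N <= k)%nat ->
        dist_lt n f eta (s k) p eps.

(* Main.v *)
Require Import Defs.
From Stdlib Require Import Reals Lra Psatz.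
From Coquelicot Require Import Coquelicot.
Open Scope R_scope.

Lemma mono_nonpos (h h' : R -> R) a b : a <= b ->
  (forall t, a <= t <= b -> is_derive h t (h' t)) ->
  (forall t, a <= t <= b -> h' t <= 0) -> h b <= h a.
Proof.
 intros Hab Hd Hs.
 destruct (MVT_gen h a b h') as [c [Hc E]].
 - intros x Hx. apply Hd. rewrite Rmin_left, Rmax_right in Hx; lra.
 - intros x Hx. apply continuity_pt_filterlim. apply (@ex_derive_continuous R_AbsRing R_NormedModule).
   exists (h' x). apply Hd. rewrite Rmin_left, Rmax_right in Hx; lra.
 - rewrite Rmin_left, Rmax_right in Hc by lra. specialize (Hs c Hc). nra.
Qed.

Lemma sumsq_nonneg (a : nat -> R) m : 0 <= sum_f_R0 (fun j => a j ^ 2) m.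
Proof. induction m; cbn [sum_f_R0]; [apply pow2_ge_0 | pose proof (pow2_ge_0 (a (S m))); lra]. Qed.

Lemma CS_sum (a b : nat -> R) m : (sum_f_R0 (fun j => a j * b j) m)^2 <=
  sum_f_R0 (fun j => a j ^2) m * sum_f_R0 (fun j => b j^2) m.
Proof.
 induction m; cbn [sum_f_R0]. { apply Req_le; ring. }
 set (Sm := sum_f_R0 (fun j => a j * b j) m) in *.
 set (A := sum_f_R0 (fun j => a j ^2) m) in *.
 set (B := sum_f_R0 (fun j => b j ^2) m) in *.
 assert (HA : 0 <= A) by apply sumsq_nonneg.
 assert (HB : 0 <= B) by apply sumsq_nonneg.
 set (x := a (S m)); set (y := b (S m)).
 assert (H1 : 2 * Sm * x * y <= A * y^2 + x^2 * B).
 { assert (Hsq : (2*Sm*x*y)^2 <= (A * y^2 + x^2 * B)^2).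
   { assert (0 <= (A*y^2 - x^2*B)^2) by apply pow2_ge_0.
     assert (Sm^2 * (x^2*y^2) <= A*B*(x^2*y^2)).
     { apply Rmult_le_compat_r; [|lra]. pose proof (pow2_ge_0 x); pose proof (pow2_ge_0 y); nra. }
     assert ((2*Sm*x*y)^2 = 4 * (Sm^2 * (x^2*y^2))) by ring.
     assert ((A * y^2 + x^2 * B)^2 = (A*y^2 - x^2*B)^2 + 4 * (A*B*(x^2*y^2))) by ring.
     lra. }
   assert (0 <= A * y^2 + x^2 * B) by nra.
   destruct (Rle_dec (2*Sm*x*y) 0); [lra|]. nra. }
 nra.
Qed.
Open Scope R_scope.

Lemma c_plus (f g : R -> R) x : continuous f x -> continuous g x -> continuous (fun t => f t + g t) x.
Proof. intros; apply (continuous_plus f g); auto. Qed.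
Lemma c_mult (f g : R -> R) x : continuous f x -> continuous g x -> continuous (fun t => f t * g t) x.
Proof. intros; apply (continuous_mult f g); auto. Qed.
Lemma c_minus (f g : R -> R) x : continuous f x -> continuous g x -> continuous (fun t => f t - g t) x.
Proof. intros; apply (continuous_minus f g); auto. Qed.
Lemma c_sq (f : R -> R) x : continuous f x -> continuous (fun t => f t ^ 2) x.
Proof. intros. apply (continuous_ext (fun t => f t * f t) (fun t => f t ^ 2)). intros y; change (f y * f y = f y ^ 2 :> R); ring. now apply c_mult. Qed.
Lemma c_sum (F : nat -> R -> R) x m : (forall j, (j <= m)%nat -> continuous (F j) x) ->
  continuous (fun t => sum_f_R0 (fun j => F j t) m) x.
Proof.
  induction m; intros H; cbn [sum_f_R0]. apply H; lia.
  apply c_plus. apply IHm; intros; apply H; lia. apply H; lia.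
Qed.

Lemma fext_0 n f x : fext n f 0 x = 0.
Proof. reflexivity. Qed.
Lemma fext_big n f j x : (n < j)%nat -> fext n f j x = 0.
Proof. intros H. unfold fext. replace (Nat.leb j n) with false. now destruct (Nat.leb 1 j).
  symmetry. now apply Nat.leb_gt. Qed.

Definition Vc (n : nat) (c : curve) t := sum_f_R0 (fun j => cv c j t ^ 2) n.
Definition Nc n c t := sqrt (1 + Vc n c t).
Definition Tc n f c j t := cv c (j-1) t * fext n f j (cx c t) - cv c (S j) t * fext n f (S j) (cx c t).
Definition wc n f c j t := Derive (cv c j) t + Tc n f c j t * Derive (cx c) t.
Definition Wc n f c t := sum_f_R0 (fun j => wc n f c j t ^ 2) n.
Definition gS n f eta c t := sqrt (speed2 n f eta c t).
Definition Fc n f eta c t := RInt (gS n f eta c) 0 t.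

Lemma speed2_eq n f eta c t : speed2 n f eta c t =
  (eta (cx c t) (cv c 0%nat t))^2 * (Derive (cx c) t)^2 + Wc n f c t.
Proof. reflexivity. Qed.

Lemma Wc_nonneg n f c t : 0 <= Wc n f c t.
Proof. unfold Wc. generalize n at 2. induction n0; cbn [sum_f_R0].
  apply pow2_ge_0. pose proof (pow2_ge_0 (wc n f c (S n0) t)); lra. Qed.

Lemma Tc_cont n f c j t : (j <= n)%nat -> admissible n c ->
  (forall j x, continuous (fext n f j) x) -> continuous (fun t => Tc n f c j t) t.
Proof.
  intros Hj [[Hx1 Hx2] Hv] Hf. unfold Tc.
  assert (Hcv : forall i, (i <= n)%nat -> continuous (cv c i) t).
  { intros i Hi. apply (@ex_derive_continuous R_AbsRing R_NormedModule). apply (Hv i Hi). }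
  assert (Hcx : continuous (cx c) t).
  { apply (@ex_derive_continuous R_AbsRing R_NormedModule). apply Hx1. }
  assert (Hfx : forall i, continuous (fun t => fext n f i (cx c t)) t).
  { intros i. apply (continuous_comp (cx c) (fext n f i)); auto. }
  apply c_minus. apply c_mult; auto. apply Hcv; lia.
  destruct (Nat.le_gt_cases (S j) n).
  - apply c_mult; auto.
  - apply (continuous_ext (fun _ => 0)). intros y; rewrite fext_big by lia; symmetry; apply Rmult_0_r.
    apply continuous_const.
Qed.

Lemma gS_cont n f eta c t : admissible n c ->
  (forall j x, continuous (fext n f j) x) ->
  (forall x u, continuous (fun p : R * R => eta (fst p) (snd p)) (x, u)) ->
  continuous (gS n f eta c) t.
Proof.
  intros Ha Hf He. pose proof Ha as [[Hx1 Hx2] Hv].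
  assert (Hcv : forall i, (i <= n)%nat -> continuous (cv c i) t).
  { intros i Hi. apply (@ex_derive_continuous R_AbsRing R_NormedModule). apply (Hv i Hi). }
  assert (Hcx : continuous (cx c) t).
  { apply (@ex_derive_continuous R_AbsRing R_NormedModule). apply Hx1. }
  unfold gS. apply continuous_sqrt_comp.
  apply (continuous_ext (fun t => (eta (cx c t) (cv c 0%nat t))^2 * (Derive (cx c) t)^2 + Wc n f c t)).
  { intros; symmetry; apply speed2_eq. }
  apply c_plus. apply c_mult; apply c_sq; auto.
  apply (continuous_comp_2 (cx c) (cv c 0%nat) eta); auto. apply Hcv; lia.
  unfold Wc. apply c_sum. intros j Hj. apply c_sq. unfold wc.
  apply c_plus. apply (proj2 (Hv j Hj)). apply c_mult; auto. apply Tc_cont; auto.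
Qed.

Ltac rring := cbv beta; match goal with |- ?a = ?b => change (@eq R a b) end; ring.

Lemma d_val (f : R -> R) x l l' : is_derive f x l -> l = l' -> is_derive f x l'.
Proof. intros H ->; auto. Qed.
Lemma d_plus (f g : R -> R) x df dg : is_derive f x df -> is_derive g x dg -> is_derive (fun t => f t + g t) x (df + dg).
Proof. intros; apply (is_derive_plus f g); auto. Qed.
Lemma d_minus (f g : R -> R) x df dg : is_derive f x df -> is_derive g x dg -> is_derive (fun t => f t - g t) x (df - dg).
Proof. intros; apply (is_derive_minus f g); auto. Qed.
Lemma d_mult (f g : R -> R) x df dg : is_derive f x df -> is_derive g x dg -> is_derive (fun t => f t * g t) x (df * g x + f x * dg).
Proof. intros; apply (is_derive_mult f g); auto. intros; apply Rmult_comm. Qed.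
Lemma d_sq (g : R -> R) x : ex_derive g x -> is_derive (fun t => g t ^ 2) x (2 * g x * Derive g x).
Proof. intros H. apply Derive_correct in H. eapply d_val. apply (is_derive_pow g 2); eauto. simpl; ring. Qed.
Lemma d_const (a x : R) : is_derive (fun _ => a) x 0.
Proof. apply (is_derive_const a x). Qed.
Lemma d_id (x : R) : is_derive (fun t => t) x 1.
Proof. apply (is_derive_id x). Qed.
Lemma d_scal (f : R -> R) k x df : is_derive f x df -> is_derive (fun t => k * f t) x (k * df).
Proof. apply is_derive_scal. Qed.
Lemma d_opp (f : R -> R) x df : is_derive f x df -> is_derive (fun t => - f t) x (- df).
Proof. intros; apply (is_derive_opp f); auto. Qed.

Lemma Vc_derive n c t : (forall j, (j <= n)%nat -> ex_derive (cv c j) t) ->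
  is_derive (Vc n c) t (sum_f_R0 (fun j => 2 * cv c j t * Derive (cv c j) t) n).
Proof.
  intros H. unfold Vc.
  assert (forall m, (m <= n)%nat -> is_derive (fun t => sum_f_R0 (fun j => cv c j t ^ 2) m) t
     (sum_f_R0 (fun j => 2 * cv c j t * Derive (cv c j) t) m)).
  { induction m; intros Hm; cbn [sum_f_R0].
    - apply d_sq. apply H; lia.
    - apply (is_derive_plus (fun t => sum_f_R0 (fun j => cv c j t ^ 2) m) (fun t => cv c (S m) t ^ 2)).
      apply IHm; lia. apply d_sq. apply H; lia. }
  apply H0; lia.
Qed.

Lemma tele (a : nat -> R) m : sum_f_R0 (fun j => a j - a (S j)) m = a 0%nat - a (S m).
Proof. induction m; cbn [sum_f_R0]. ring. rewrite IHm; ring. Qed.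

Lemma Tc_sum n f c t : sum_f_R0 (fun j => cv c j t * Tc n f c j t) n = 0.
Proof.
  set (a := fun j => cv c j t * cv c (j-1) t * fext n f j (cx c t)).
  rewrite (sum_eq _ (fun j => a j - a (S j))).
  - rewrite tele. unfold a. rewrite fext_0, fext_big by lia. ring.
  - intros i _. unfold a, Tc. replace (S i - 1)%nat with i by lia. ring.
Qed.

Lemma sum_cv_w n f c t : sum_f_R0 (fun j => 2 * cv c j t * Derive (cv c j) t) n =
  2 * sum_f_R0 (fun j => cv c j t * wc n f c j t) n.
Proof.
  assert (forall m, sum_f_R0 (fun j => 2 * cv c j t * Derive (cv c j) t) m =
   2 * sum_f_R0 (fun j => cv c j t * wc n f c j t) m - 2 * Derive (cx c) t * sum_f_R0 (fun j => cv c j t * Tc n f c j t) m).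
  { induction m; cbn [sum_f_R0]; unfold wc. ring. rewrite IHm. unfold wc. ring. }
  rewrite H, Tc_sum. ring.
Qed.

Lemma DN_bound n f eta c t :
  Rabs (sum_f_R0 (fun j => 2 * cv c j t * Derive (cv c j) t) n) <= 2 * (Nc n c t * gS n f eta c t).
Proof.
  rewrite (sum_cv_w n f), Rabs_mult, (Rabs_right 2) by lra. apply Rmult_le_compat_l; [lra|].
  set (X := sum_f_R0 (fun j => cv c j t * wc n f c j t) n).
  assert (HCS := CS_sum (fun j => cv c j t) (fun j => wc n f c j t) n).
  fold X in HCS. fold (Vc n c t) in HCS. fold (Wc n f c t) in HCS.
  assert (HV : 0 <= Vc n c t) by apply sumsq_nonneg.
  assert (HW := Wc_nonneg n f c t).
  assert (H1 : Rabs X <= sqrt (Vc n c t) * sqrt (Wc n f c t)).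
  { rewrite <- sqrt_mult by auto. rewrite <- (sqrt_pow2 (Rabs X)) by apply Rabs_pos.
    apply sqrt_le_1_alt. rewrite pow2_abs. auto. }
  assert (H2 : sqrt (Vc n c t) <= Nc n c t) by (apply sqrt_le_1_alt; lra).
  assert (H3 : sqrt (Wc n f c t) <= gS n f eta c t).
  { apply sqrt_le_1_alt. rewrite speed2_eq.
    pose proof (pow2_ge_0 (eta (cx c t) (cv c 0%nat t))). pose proof (pow2_ge_0 (Derive (cx c) t)). nra. }
  pose proof (sqrt_pos (Vc n c t)). pose proof (sqrt_pos (Wc n f c t)).
  apply Rle_trans with (1 := H1). apply Rmult_le_compat; auto.
Qed.

Lemma gS_nonneg n f eta c t : 0 <= gS n f eta c t.
Proof. apply sqrt_pos. Qed.

Lemma Nc_pos n c t : 1 <= Nc n c t.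
Proof. unfold Nc. assert (0 <= Vc n c t) by apply sumsq_nonneg.
  apply Rle_trans with (sqrt 1). rewrite sqrt_1; lra. apply sqrt_le_1_alt; lra. Qed.

Lemma term_le_sum (a : nat -> R) j m : (j <= m)%nat -> a j ^ 2 <= sum_f_R0 (fun i => a i ^ 2) m.
Proof. induction m; intros H; cbn [sum_f_R0].
  - replace j with 0%nat by lia. lra.
  - destruct (Nat.eq_dec j (S m)). subst. pose proof (sumsq_nonneg a m); lra.
    pose proof (pow2_ge_0 (a (S m))). specialize (IHm ltac:(lia)). lra. Qed.

Lemma abs_le_sqrt a S : a ^ 2 <= S -> Rabs a <= sqrt S.
Proof. intros H. rewrite <- (sqrt_pow2 (Rabs a)) by apply Rabs_pos. apply sqrt_le_1_alt.
  rewrite pow2_abs. auto. Qed.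

Lemma cv_le_Nc n c i t : (i <= n)%nat -> Rabs (cv c i t) <= Nc n c t.
Proof. intros H. apply abs_le_sqrt. pose proof (term_le_sum (fun j => cv c j t) i n H). unfold Vc. lra. Qed.

Lemma eta_xp_le n f eta c t : Rabs (eta (cx c t) (cv c 0%nat t) * Derive (cx c) t) <= gS n f eta c t.
Proof. apply abs_le_sqrt. rewrite speed2_eq. pose proof (Wc_nonneg n f c t). 
  replace ((eta (cx c t) (cv c 0%nat t) * Derive (cx c) t)^2) with ((eta (cx c t) (cv c 0%nat t))^2 * (Derive (cx c) t)^2) by ring. lra. Qed.

Lemma wc_le n f eta c j t : (j <= n)%nat -> Rabs (wc n f c j t) <= gS n f eta c t.
Proof. intros H. apply abs_le_sqrt. rewrite speed2_eq. 
  assert (H0 : wc n f c j t ^ 2 <= Wc n f c t) by apply (term_le_sum (fun j => wc n f c j t) j n H).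
  pose proof (pow2_ge_0 (eta (cx c t) (cv c 0%nat t))). pose proof (pow2_ge_0 (Derive (cx c) t)). nra. Qed.

Lemma Fc_derive n f eta c t : admissible n c ->
  (forall j x, continuous (fext n f j) x) ->
  (forall x u, continuous (fun p : R * R => eta (fst p) (snd p)) (x, u)) ->
  is_derive (Fc n f eta c) t (gS n f eta c t).
Proof.
  intros Ha Hf He. unfold Fc. apply (is_derive_RInt (gS n f eta c) _ 0).
  apply filter_forall. intros b. apply (@RInt_correct R_CompleteNormedModule). apply (@ex_RInt_continuous R_CompleteNormedModule).
  intros; apply gS_cont; auto. apply gS_cont; auto.
Qed.

Lemma Fc_0 n f eta c : Fc n f eta c 0 = 0.
Proof. unfold Fc. rewrite RInt_point. reflexivity. Qed.

Lemma Fc_bounds n f eta c t : admissible n c ->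
  (forall j x, continuous (fext n f j) x) ->
  (forall x u, continuous (fun p : R * R => eta (fst p) (snd p)) (x, u)) ->
  0 <= t <= 1 -> 0 <= Fc n f eta c t <= curve_length n f eta c.
Proof.
  intros Ha Hf He Ht.
  assert (Hex : forall a b, ex_RInt (gS n f eta c) a b).
  { intros; apply (@ex_RInt_continuous R_CompleteNormedModule); intros; apply gS_cont; auto. }
  unfold Fc, curve_length. fold (gS n f eta c).
  rewrite <- (RInt_Chasles (gS n f eta c) 0 t 1) by auto.
  assert (0 <= RInt (gS n f eta c) 0 t) by (apply RInt_ge_0; [lra | auto | intros; apply gS_nonneg]).
  assert (0 <= RInt (gS n f eta c) t 1) by (apply RInt_ge_0; [lra | auto | intros; apply gS_nonneg]).
  change (plus ?a ?b) with (a + b). lra.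
Qed.

Lemma Nc_derive n c t : (forall j, (j <= n)%nat -> ex_derive (cv c j) t) ->
  is_derive (Nc n c) t (sum_f_R0 (fun j => 2 * cv c j t * Derive (cv c j) t) n / (2 * Nc n c t)).
Proof.
  intros H. unfold Nc.
  eapply d_val. apply (is_derive_sqrt (fun t => 1 + Vc n c t)).
  apply d_plus. apply d_const. apply Vc_derive; auto.
  assert (0 <= Vc n c t) by apply sumsq_nonneg. lra.
  simpl. unfold Nc. field. pose proof (Nc_pos n c t). unfold Nc in H0. lra.
Qed.

Lemma DN_le n f eta c t : Rabs (sum_f_R0 (fun j => 2 * cv c j t * Derive (cv c j) t) n / (2 * Nc n c t)) <= gS n f eta c t.
Proof.
  pose proof (Nc_pos n c t). pose proof (DN_bound n f eta c t).
  unfold Rdiv. rewrite Rabs_mult, Rabs_inv, (Rabs_right (2 * _)) by lra.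
  apply (Rmult_le_reg_r (2 * Nc n c t)). lra.
  rewrite Rmult_assoc, Rinv_l by lra. lra.
Qed.

Lemma adm_dv n c : admissible n c -> forall t j, (j <= n)%nat -> ex_derive (cv c j) t.
Proof. intros [_ Hv] t j Hj. apply (Hv j Hj). Qed.
Lemma adm_dx n c : admissible n c -> forall t, ex_derive (cx c) t.
Proof. intros [[H _] _] t. apply H. Qed.

Lemma L1 n f eta c t : admissible n c ->
  (forall j x, continuous (fext n f j) x) ->
  (forall x u, continuous (fun p : R * R => eta (fst p) (snd p)) (x, u)) ->
  0 <= t <= 1 -> Nc n c t <= Nc n c 0 + Fc n f eta c t /\ Nc n c 0 <= Nc n c t + Fc n f eta c t.
Proof.
  intros Ha Hf He Ht. split.
  - assert (H := mono_nonpos (fun s => Nc n c s - Fc n f eta c s)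
      (fun s => sum_f_R0 (fun j => 2 * cv c j s * Derive (cv c j) s) n / (2 * Nc n c s) - gS n f eta c s) 0 t).
    cbv beta in H. rewrite Fc_0 in H. enough (Nc n c t - Fc n f eta c t <= Nc n c 0 - 0) by lra.
    apply H. lra.
    + intros s _. apply d_minus. apply Nc_derive. intros; apply (adm_dv n c Ha); auto. apply Fc_derive; auto.
    + intros s _. pose proof (DN_le n f eta c s). pose proof (Rle_abs (sum_f_R0 (fun j => 2 * cv c j s * Derive (cv c j) s) n / (2 * Nc n c s))). lra.
  - assert (H := mono_nonpos (fun s => - Nc n c s - Fc n f eta c s)
      (fun s => - (sum_f_R0 (fun j => 2 * cv c j s * Derive (cv c j) s) n / (2 * Nc n c s)) - gS n f eta c s) 0 t).
    cbv beta in H. rewrite Fc_0 in H. enough (- Nc n c t - Fc n f eta c t <= - Nc n c 0 - 0) by lra.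
    apply H. lra.
    + intros s _. apply d_minus. apply d_opp. apply Nc_derive. intros; apply (adm_dv n c Ha); auto.
      apply Fc_derive; auto.
    + intros s _. pose proof (DN_le n f eta c s). pose proof (Rle_abs (- (sum_f_R0 (fun j => 2 * cv c j s * Derive (cv c j) s) n / (2 * Nc n c s)))). rewrite Rabs_Ropp in H1. lra.
Qed.

Lemma xp_le n f eta c C s : 0 < C -> C <= eta (cx c s) (cv c 0%nat s) ->
  C * Rabs (Derive (cx c) s) <= gS n f eta c s.
Proof. intros HC H. pose proof (eta_xp_le n f eta c s). rewrite Rabs_mult in H0.
  rewrite (Rabs_right (eta _ _)) in H0 by lra. pose proof (Rabs_pos (Derive (cx c) s)).
  eapply Rle_trans; [|apply H0]. apply Rmult_le_compat_r; auto. Qed.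

Lemma L2 n f eta c C t : admissible n c ->
  (forall j x, continuous (fext n f j) x) ->
  (forall x u, continuous (fun p : R * R => eta (fst p) (snd p)) (x, u)) ->
  0 < C -> (forall s, 0 <= s <= 1 -> C <= eta (cx c s) (cv c 0%nat s)) ->
  0 <= t <= 1 -> C * Rabs (cx c t - cx c 0) <= Fc n f eta c t.
Proof.
  intros Ha Hf He HC Heta Ht.
  assert (A : C * (cx c t - cx c 0) <= Fc n f eta c t).
  { assert (H := mono_nonpos (fun s => C * cx c s - Fc n f eta c s)
      (fun s => C * Derive (cx c) s - gS n f eta c s) 0 t).
    cbv beta in H. rewrite Fc_0 in H.
    enough (C * cx c t - Fc n f eta c t <= C * cx c 0 - 0) by lra. apply H. lra.
    + intros s _. apply d_minus. apply d_scal. apply Derive_correct, (adm_dx n c Ha). apply Fc_derive; auto.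
    + intros s Hs. pose proof (xp_le n f eta c C s HC (Heta s ltac:(lra))).
      pose proof (Rle_abs (Derive (cx c) s)).
      assert (C * Derive (cx c) s <= C * Rabs (Derive (cx c) s)) by (apply Rmult_le_compat_l; lra). lra. }
  assert (B : - C * (cx c t - cx c 0) <= Fc n f eta c t).
  { assert (H := mono_nonpos (fun s => - C * cx c s - Fc n f eta c s)
      (fun s => - C * Derive (cx c) s - gS n f eta c s) 0 t).
    cbv beta in H. rewrite Fc_0 in H.
    enough (- C * cx c t - Fc n f eta c t <= - C * cx c 0 - 0) by lra. apply H. lra.
    + intros s _. apply d_minus. apply d_scal. apply Derive_correct, (adm_dx n c Ha). apply Fc_derive; auto.
    + intros s Hs. pose proof (xp_le n f eta c C s HC (Heta s ltac:(lra))).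
      pose proof (Rle_abs (- Derive (cx c) s)). rewrite Rabs_Ropp in H1.
      assert (C * (- Derive (cx c) s) <= C * Rabs (Derive (cx c) s)) by (apply Rmult_le_compat_l; lra). lra. }
  unfold Rabs; destruct (Rcase_abs _); lra.
Qed.

Lemma Tc_le n f c j s M B : (j <= n)%nat -> (forall i, (i <= n)%nat -> Rabs (cv c i s) <= M) ->
  (forall i, Rabs (fext n f i (cx c s)) <= B) -> Rabs (Tc n f c j s) <= 2 * M * B.
Proof.
  intros Hj HM HB. unfold Tc.
  assert (H1 : Rabs (cv c (j-1) s) <= M) by (apply HM; lia).
  assert (H0 : 0 <= B) by (eapply Rle_trans; [apply Rabs_pos | apply (HB 0%nat)]).
  assert (H2 : Rabs (cv c (S j) s * fext n f (S j) (cx c s)) <= M * B).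
  { destruct (Nat.le_gt_cases (S j) n).
    - rewrite Rabs_mult. apply Rmult_le_compat; try apply Rabs_pos; auto.
    - rewrite fext_big by lia. rewrite Rmult_0_r, Rabs_R0. pose proof (Rabs_pos (cv c (j-1) s)).
      apply Rmult_le_pos; lra. }
  assert (H3 : Rabs (cv c (j-1) s * fext n f j (cx c s)) <= M * B).
  { rewrite Rabs_mult. apply Rmult_le_compat; try apply Rabs_pos; auto. }
  eapply Rle_trans. apply Rabs_triang. rewrite Rabs_Ropp. lra.
Qed.

Lemma L3 n f eta c C M B j t : admissible n c ->
  (forall j x, continuous (fext n f j) x) ->
  (forall x u, continuous (fun p : R * R => eta (fst p) (snd p)) (x, u)) ->
  0 < C -> (forall s, 0 <= s <= 1 -> C <= eta (cx c s) (cv c 0%nat s)) ->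
  (forall s, 0 <= s <= 1 -> Nc n c s <= M) ->
  (forall s, 0 <= s <= 1 -> forall i, Rabs (fext n f i (cx c s)) <= B) ->
  (j <= n)%nat -> 0 <= t <= 1 ->
  Rabs (cv c j t - cv c j 0) <= (1 + 2 * M * B / C) * Fc n f eta c t.
Proof.
  intros Ha Hf He HC Heta HM HB Hj Ht.
  set (K := 1 + 2 * M * B / C).
  assert (Hd : forall s, 0 <= s <= 1 -> Rabs (Derive (cv c j) s) <= K * gS n f eta c s).
  { intros s Hs.
    assert (E : Derive (cv c j) s = wc n f c j s - Tc n f c j s * Derive (cx c) s) by (unfold wc; ring).
    rewrite E. eapply Rle_trans. apply Rabs_triang. rewrite Rabs_Ropp, Rabs_mult.
    pose proof (wc_le n f eta c j s Hj).
    pose proof (Tc_le n f c j s M B Hj (fun i Hi => Rle_trans _ _ _ (cv_le_Nc n c i s Hi) (HM s Hs)) (HB s Hs)).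
    pose proof (xp_le n f eta c C s HC (Heta s Hs)).
    assert (0 <= M) by (pose proof (Nc_pos n c s); pose proof (HM s Hs); lra).
    assert (0 <= B) by (eapply Rle_trans; [apply Rabs_pos | apply (HB s Hs 0%nat)]).
    assert (Rabs (Derive (cx c) s) <= gS n f eta c s / C).
    { apply (Rmult_le_reg_l C); auto. replace (C * (gS n f eta c s / C)) with (gS n f eta c s) by (field; lra). lra. }
    assert (Rabs (Tc n f c j s) * Rabs (Derive (cx c) s) <= (2*M*B) * (gS n f eta c s / C)).
    { apply Rmult_le_compat; auto; apply Rabs_pos. }
    unfold K. replace ((1 + 2 * M * B / C) * gS n f eta c s) with (gS n f eta c s + 2*M*B * (gS n f eta c s / C)) by (field; lra).
    lra. }
  assert (A : forall sg, sg = 1 \/ sg = -1 -> sg * (cv c j t - cv c j 0) <= K * Fc n f eta c t).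
  { intros sg Hsg.
    assert (H := mono_nonpos (fun s => sg * cv c j s - K * Fc n f eta c s)
      (fun s => sg * Derive (cv c j) s - K * gS n f eta c s) 0 t).
    cbv beta in H. rewrite Fc_0 in H.
    enough (sg * cv c j t - K * Fc n f eta c t <= sg * cv c j 0 - K * 0) by lra. apply H. lra.
    + intros s _. apply d_minus; apply d_scal. apply Derive_correct, (adm_dv n c Ha); auto. apply Fc_derive; auto.
    + intros s Hs. specialize (Hd s ltac:(lra)). pose proof (Rle_abs (Derive (cv c j) s)).
      pose proof (Rle_abs (- Derive (cv c j) s)). rewrite Rabs_Ropp in H1.
      destruct Hsg; subst; lra. }
  pose proof (A 1 (or_introl eq_refl)). pose proof (A (-1) (or_intror eq_refl)).
  unfold Rabs; destruct (Rcase_abs _); lra.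
Qed.

Lemma exp_mono a b : a <= b -> exp a <= exp b.
Proof. intros [H|H]. left; apply exp_increasing; auto. subst; lra. Qed.

Lemma d_expl a u : is_derive (fun u => exp (a*u)) u (a * exp (a*u)).
Proof. auto_derive. auto. ring. Qed.

Lemma ode_pos (g g1 g2 : R -> R) k :
  (forall u, is_derive g u (g1 u)) -> (forall u, is_derive g1 u (g2 u)) ->
  g 0 = 1 -> g1 0 = -k -> (forall u, k^2 * g u <= g2 u) ->
  forall u, 0 <= u -> exp (-k*u) <= g u.
Proof.
  intros Hg Hg1 H0 H1 Hk.
  assert (S1 : forall u, 0 <= u -> 0 <= (g1 u + k * g u) * exp (-k*u)).
  { intros u Hu.
    assert (H := mono_nonpos (fun s => - ((g1 s + k * g s) * exp (-k*s)))
       (fun s => - ((g2 s - k^2 * g s) * exp (-k*s))) 0 u Hu).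
    cbv beta in H. rewrite H0, H1 in H. replace (-k*0) with 0 in H by ring. rewrite exp_0 in H.
    enough (- ((g1 u + k * g u) * exp (-k*u)) <= - ((-k + k*1) * 1)) by lra. apply H.
    - intros s _. apply d_opp. eapply d_val. apply d_mult. apply d_plus. apply Hg1. apply d_scal, Hg.
      apply d_expl. rring.
    - intros s _. specialize (Hk s). pose proof (exp_pos (-k*s)). 
      assert (0 <= (g2 s - k^2 * g s) * exp (-k*s)) by (apply Rmult_le_pos; lra). lra. }
  intros u Hu.
  assert (H := mono_nonpos (fun s => - (g s * exp (k*s)))
       (fun s => - ((g1 s + k * g s) * exp (k*s))) 0 u Hu).
  cbv beta in H. rewrite H0 in H. replace (k*0) with 0 in H by ring. rewrite exp_0 in H.
  assert (E : g u * exp (k*u) >= 1).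
  { enough (- (g u * exp (k*u)) <= - (1 * 1)) by lra. apply H.
    - intros s _. apply d_opp. eapply d_val. apply d_mult. apply Hg. apply d_expl. rring.
    - intros s Hs. specialize (S1 s ltac:(lra)).
      assert (Ee : exp (-k*s) * exp (k*s) = 1) by (rewrite <- exp_plus; replace (-k*s + k*s) with 0 by ring; apply exp_0).
      assert (0 <= ((g1 s + k * g s) * exp (-k*s)) * (exp (k*s) * exp (k*s))).
      { apply Rmult_le_pos; auto. pose proof (exp_pos (k*s)); nra. }
      replace (((g1 s + k * g s) * exp (-k*s)) * (exp (k*s) * exp (k*s))) with
        ((g1 s + k * g s) * exp (k*s) * (exp (-k*s) * exp (k*s))) in H2 by ring.
      rewrite Ee in H2. lra. }
  assert (Ee : exp (-k*u) * exp (k*u) = 1) by (rewrite <- exp_plus; replace (-k*u + k*u) with 0 by ring; apply exp_0).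
  pose proof (exp_pos (-k*u)). pose proof (exp_pos (k*u)).
  apply (Rmult_le_reg_r (exp (k*u))); auto. lra.
Qed.

Lemma ode_cmp (g g1 g2 : R -> R) k :
  (forall u, is_derive g u (g1 u)) -> (forall u, is_derive g1 u (g2 u)) ->
  g 0 = 1 -> g1 0 = -k -> (forall u, k^2 * g u <= g2 u) ->
  forall u, exp (-k*u) <= g u.
Proof.
  intros Hg Hg1 H0 H1 Hk u. destruct (Rle_dec 0 u). apply (ode_pos g g1 g2); auto.
  assert (H := ode_pos (fun s => g (-s)) (fun s => - g1 (-s)) (fun s => g2 (-s)) (-k)).
  replace (-k*u) with (- - k * - u) by ring. rewrite <- (Ropp_involutive u) at 2. apply H; try lra.
  - intros s. eapply d_val. apply (is_derive_comp g (fun s => -s)). apply Hg. apply d_opp, d_id. simpl. unfold scal; simpl; unfold mult; simpl; rring.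
  - intros s. eapply d_val. apply d_opp. apply (is_derive_comp g1 (fun s => -s)). apply Hg1. apply d_opp, d_id. simpl. unfold scal; simpl; unfold mult; simpl; rring.
  - simpl. replace (-0) with 0 by ring. auto.
  - replace (-0) with 0 by ring. rewrite H1. ring.
  - intros s. replace ((- k)^2) with (k^2) by ring. apply Hk.
Qed.

Lemma eta_facts eta : smooth2 eta ->
  (forall x u, continuous (fun p : R * R => eta (fst p) (snd p)) (x, u)) /\
  exists D1 D2 : R -> R -> R, forall x u,
    is_derive (fun w => eta x w) u (D1 x u) /\ is_derive (D1 x) u (D2 x u) /\
    eta_u eta x u = D1 x u /\ eta_uu eta x u = D2 x u.
Proof.
  intros [D [H0 [Hx [Hu Hc]]]]. split.
  - intros x u. apply (continuous_ext (fun p : R * R => D 0%nat 0%nat (fst p) (snd p))).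
    intros p; apply H0. apply Hc.
  - exists (D 0%nat 1%nat), (D 0%nat 2%nat). intros x u.
    assert (A : forall u, is_derive (fun w => eta x w) u (D 0%nat 1%nat x u)).
    { intros v. apply (is_derive_ext (fun w => D 0%nat 0%nat x w)). intros; apply H0. apply Hu. }
    assert (B : forall u, eta_u eta x u = D 0%nat 1%nat x u).
    { intros v. unfold eta_u. apply is_derive_unique. apply A. }
    split; [apply A|]. split; [apply Hu|]. split; [apply B|].
    unfold eta_uu. rewrite (Derive_ext (fun w => eta_u eta x w) (D 0%nat 1%nat x) u) by apply B.
    apply is_derive_unique. apply Hu.
Qed.

Lemma eta_lower eta Lam : smooth2 eta ->
  (forall x u, 0 < eta x u) ->
  (forall x, eta x 0 = 1) ->
  (forall x u, Scal eta x u < 0) ->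
  (forall x u, Rabs (k_gamma eta x) <= sqrt (1 / 2 * Rabs (Scal eta x u))) ->
  (forall x, Rabs (k_gamma eta x) <= Lam) ->
  forall x u, exp (- Lam * Rabs u) <= eta x u.
Proof.
  intros Hs Hpos H1 HS Hk HL x u.
  destruct (eta_facts eta Hs) as [_ [D1 [D2 HD]]].
  set (k := k_gamma eta x).
  assert (E : exp (-k*u) <= eta x u).
  { apply (ode_cmp (fun w => eta x w) (D1 x) (D2 x) k).
    - intros v; apply (HD x v).
    - intros v; apply (HD x v).
    - apply H1.
    - unfold k, k_gamma. destruct (HD x 0) as [_ [_ [E _]]]. rewrite E. ring.
    - intros v. specialize (Hk x v). fold k in Hk. specialize (HS x v). specialize (Hpos x v).
      destruct (HD x v) as [_ [_ [_ E]]]. unfold Scal in *. rewrite E in *.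
      rewrite (Rabs_left (-2 * D2 x v / eta x v)) in Hk by lra.
      assert (Hy : 0 <= 1 / 2 * - (-2 * D2 x v / eta x v)) by lra.
      assert (Hk2 : k ^ 2 <= 1 / 2 * - (-2 * D2 x v / eta x v)).
      { rewrite <- pow2_abs. rewrite <- (pow2_sqrt (1 / 2 * - (-2 * D2 x v / eta x v))) by auto.
        apply pow_incr. split; auto. apply Rabs_pos. }
      replace (1 / 2 * - (-2 * D2 x v / eta x v)) with (D2 x v / eta x v) in Hk2 by (field; lra).
      apply (Rmult_le_compat_r (eta x v)) in Hk2; [|lra].
      replace (D2 x v / eta x v * eta x v) with (D2 x v) in Hk2 by (field; lra). lra. }
  eapply Rle_trans; [|apply E]. apply exp_mono.
  specialize (HL x). fold k in HL.
  assert (- k * u >= - (Rabs k * Rabs u)).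
  { rewrite <- Rabs_mult. pose proof (Rle_abs (k*u)). replace (-k*u) with (-(k*u)) by ring. lra. }
  pose proof (Rabs_pos u). assert (Rabs k * Rabs u <= Lam * Rabs u) by (apply Rmult_le_compat_r; auto). lra.
Qed.

Lemma fext_cont n f : (forall j, (1 <= j)%nat -> (j <= n)%nat -> smooth1 (f j)) ->
  forall j x, continuous (fext n f j) x.
Proof.
  intros Hf j x. unfold fext. destruct (Nat.leb 1 j) eqn:E1; destruct (Nat.leb j n) eqn:E2; simpl;
   try apply continuous_const.
  apply Nat.leb_le in E1. apply Nat.leb_le in E2.
  apply (@ex_derive_continuous R_AbsRing R_NormedModule). apply (Hf j E1 E2 1%nat x).
Qed.

Lemma fbound n f x0 : (forall j x, continuous (fext n f j) x) ->
  exists d B, 0 < d /\ 0 <= B /\ forall j y, Rabs (y - x0) < d -> Rabs (fext n f j y) <= B.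
Proof.
  intros Hc.
  assert (forall m, exists d B, 0 < d /\ 0 <= B /\ forall j y, (j <= m)%nat -> Rabs (y - x0) < d -> Rabs (fext n f j y) <= B).
  { induction m.
    - exists 1, 0. repeat split; try lra. intros j y Hj _. replace j with 0%nat by lia. rewrite fext_0, Rabs_R0. lra.
    - destruct IHm as [d [B [Hd [HB H]]]].
      destruct (proj1 (filterlim_locally (F:=locally x0) (fext n f (S m)) (fext n f (S m) x0)) (Hc (S m) x0) (mkposreal 1 Rlt_0_1)) as [e He].
      exists (Rmin d e), (Rmax B (Rabs (fext n f (S m) x0) + 1)). repeat split.
      + apply Rmin_pos; auto. apply cond_pos.
      + eapply Rle_trans; [apply HB|apply Rmax_l].
      + intros j y Hj Hy. destruct (Nat.eq_dec j (S m)).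
        * subst j. specialize (He y). assert (ball x0 e y).
          { change (Rabs (y - x0) < e). pose proof (Rmin_r d e). lra. }
          specialize (He H0). change (Rabs (fext n f (S m) y - fext n f (S m) x0) < 1) in He.
          eapply Rle_trans; [|apply Rmax_r].
          pose proof (Rabs_triang_inv (fext n f (S m) y) (fext n f (S m) x0)). lra.
        * eapply Rle_trans; [|apply Rmax_l]. apply H; [lia|]. pose proof (Rmin_l d e). lra. }
  destruct (H n) as [d [B [Hd [HB H']]]]. exists d, B. repeat split; auto.
  intros j y Hy. destruct (Nat.le_gt_cases j n). auto. rewrite fext_big by lia. rewrite Rabs_R0; auto.
Qed.

Definition Np (n : nat) (p : point) := sqrt (1 + sum_f_R0 (fun j => snd p j ^ 2) n).

Lemma Nc_join n c p q : joins n c p q -> Nc n c 0 = Np n p /\ Nc n c 1 = Np n q.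
Proof.
  intros [_ [_ H]]. unfold Nc, Vc, Np. split; f_equal; f_equal; apply sum_eq; intros i Hi;
  destruct (H i Hi) as [A B]; rewrite ?A, ?B; reflexivity.
Qed.

Lemma ev_fin (P : nat -> nat -> Prop) m : (forall j, (j <= m)%nat -> exists N, forall k, (N <= k)%nat -> P j k) ->
  exists N, forall j k, (j <= m)%nat -> (N <= k)%nat -> P j k.
Proof.
  induction m; intros H.
  - destruct (H 0%nat (le_n 0)) as [N HN]. exists N. intros j k Hj Hk. replace j with 0%nat by lia. auto.
  - destruct IHm as [N1 H1]. intros; apply H; lia.
    destruct (H (S m) (le_n _)) as [N2 H2]. exists (max N1 N2). intros j k Hj Hk.
    destruct (Nat.eq_dec j (S m)). subst; apply H2; lia. apply H1; lia.
Qed.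

Lemma sum_le_const (a : nat -> R) K m : (forall j, (j <= m)%nat -> a j <= K) -> sum_f_R0 a m <= INR (S m) * K.
Proof.
  induction m; intros H; cbn [sum_f_R0]. simpl. specialize (H 0%nat (le_n _)). lra.
  rewrite S_INR. specialize (IHm ltac:(intros; apply H; lia)). specialize (H (S m) (le_n _)). lra.
Qed.

Lemma speed_bound n f eta c t e H M B :
  0 <= e -> 0 < eta (cx c t) (cv c 0%nat t) -> eta (cx c t) (cv c 0%nat t) <= H ->
  Rabs (Derive (cx c) t) <= e -> (forall j, (j <= n)%nat -> Rabs (Derive (cv c j) t) <= e) ->
  (forall i, (i <= n)%nat -> Rabs (cv c i t) <= M) -> (forall i, Rabs (fext n f i (cx c t)) <= B) ->
  gS n f eta c t <= sqrt (H^2 + INR (S n) * (1 + 2*M*B)^2) * e.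
Proof.
  intros He Hp HH Hx Hv HM HB.
  assert (HB0 : 0 <= B) by (eapply Rle_trans; [apply Rabs_pos | apply (HB 0%nat)]).
  assert (HM0 : 0 <= M) by (eapply Rle_trans; [apply Rabs_pos | apply (HM 0%nat); lia]).
  unfold gS. rewrite <- (sqrt_pow2 e) by auto. rewrite <- sqrt_mult.
  2:{ pose proof (pos_INR (S n)). pose proof (pow2_ge_0 H). pose proof (pow2_ge_0 (1+2*M*B)). nra. }
  2: apply pow2_ge_0.
  apply sqrt_le_1_alt. rewrite speed2_eq. unfold Wc.
  assert (A : (eta (cx c t) (cv c 0%nat t))^2 * (Derive (cx c) t)^2 <= H^2 * e^2).
  { rewrite <- (pow2_abs (Derive (cx c) t)). apply Rmult_le_compat; try apply pow2_ge_0; apply pow_incr; try lra.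
    split; auto. apply Rabs_pos. }
  assert (Bd : sum_f_R0 (fun j => wc n f c j t ^ 2) n <= INR (S n) * ((1 + 2*M*B)^2 * e^2)).
  { apply sum_le_const. intros j Hj. rewrite <- pow2_abs. replace ((1 + 2*M*B)^2 * e^2) with (((1+2*M*B)*e)^2) by ring.
    apply pow_incr. split. apply Rabs_pos. unfold wc.
    eapply Rle_trans. apply Rabs_triang. rewrite Rabs_mult.
    pose proof (Tc_le n f c j t M B Hj HM HB).
    assert (Rabs (Tc n f c j t) * Rabs (Derive (cx c) t) <= 2*M*B * e) by (apply Rmult_le_compat; auto; apply Rabs_pos).
    pose proof (Hv j Hj). lra. }
  lra.
Qed.

Definition lineC (p q : point) : curve :=
  mkCurve (fun t => fst p + t * (fst q - fst p)) (fun j t => snd p j + t * (snd q j - snd p j)).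

Lemma lin_derive a b t : is_derive (fun t => a + t * b) t b.
Proof. eapply d_val. apply d_plus. apply d_const. apply (d_mult (fun t => t) (fun _ => b) t 1 0). apply d_id. apply d_const. rring. Qed.

Lemma lin_Derive a b t : Derive (fun t => a + t * b) t = b.
Proof. apply is_derive_unique, lin_derive. Qed.

Lemma lin_C1 a b : Defs.C1 (fun t => a + t * b).
Proof. unfold Defs.C1. split. intro t0. exists b. apply lin_derive.
  intros t. apply (continuous_ext (fun _ => b)). intros; symmetry; apply lin_Derive. apply continuous_const. Qed.

Lemma lineC_adm n p q : admissible n (lineC p q).
Proof. split. apply lin_C1. intros; apply lin_C1. Qed.

Lemma lineC_joins n p q : joins n (lineC p q) p q.
Proof. unfold joins; simpl. repeat split; ring. Qed.

Lemma length_bound n f eta c K : admissible n c ->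
  (forall j x, continuous (fext n f j) x) ->
  (forall x u, continuous (fun p : R * R => eta (fst p) (snd p)) (x, u)) ->
  (forall t, 0 <= t <= 1 -> gS n f eta c t <= K) -> curve_length n f eta c <= K.
Proof.
  intros Ha Hf He HK. unfold curve_length. fold (gS n f eta c).
  apply Rle_trans with (RInt (fun _ => K) 0 1).
  apply RInt_le. lra. apply (@ex_RInt_continuous R_CompleteNormedModule); intros; apply gS_cont; auto.
  apply ex_RInt_const. intros; apply HK; lra.
  rewrite RInt_const. change (scal (1 - 0) K) with ((1-0) * K). lra.
Qed.

Lemma eta_loc eta x0 u0 : (forall x u, continuous (fun p : R * R => eta (fst p) (snd p)) (x, u)) ->
  exists d, 0 < d /\ forall y w, Rabs (y - x0) < d -> Rabs (w - u0) < d -> eta y w <= eta x0 u0 + 1.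
Proof.
  intros He. destruct (proj1 (filterlim_locally (F:=locally (x0,u0)) (fun p : R * R => eta (fst p) (snd p)) (eta x0 u0)) (He x0 u0) (mkposreal 1 Rlt_0_1)) as [d Hd].
  exists d. split. apply cond_pos. intros y w Hy Hw.
  assert (ball (x0, u0) d (y, w)) by (split; assumption).
  specialize (Hd _ H). change (Rabs (eta y w - eta x0 u0) < 1) in Hd.
  pose proof (Rle_abs (eta y w - eta x0 u0)). lra.
Qed.

Lemma Fc_1 n f eta c : Fc n f eta c 1 = curve_length n f eta c.
Proof. reflexivity. Qed.

Lemma curve_Nc n f eta c p q t : admissible n c ->
  (forall j x, continuous (fext n f j) x) ->
  (forall x u, continuous (fun p : R * R => eta (fst p) (snd p)) (x, u)) ->
  joins n c p q -> 0 <= t <= 1 ->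
  Nc n c t <= Np n p + curve_length n f eta c /\ Np n q <= Np n p + curve_length n f eta c.
Proof.
  intros Ha Hf He Hj Ht. destruct (Nc_join n c p q Hj) as [E0 E1].
  destruct (L1 n f eta c t Ha Hf He Ht) as [A _].
  destruct (L1 n f eta c 1 Ha Hf He ltac:(lra)) as [B _].
  pose proof (Fc_bounds n f eta c t Ha Hf He Ht). rewrite Fc_1 in B.
  rewrite E0 in A, B. rewrite E1 in B. lra.
Qed.

Lemma curve_eta n c eta Lam M : 0 <= Lam ->
  (forall x u, exp (- Lam * Rabs u) <= eta x u) ->
  forall t, Nc n c t <= M -> exp (- Lam * M) <= eta (cx c t) (cv c 0%nat t).
Proof.
  intros HL Hlow t HN. eapply Rle_trans; [|apply Hlow]. apply exp_mono.
  pose proof (cv_le_Nc n c 0 t ltac:(lia)).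
  assert (Lam * Rabs (cv c 0%nat t) <= Lam * M) by (apply Rmult_le_compat_l; lra). lra.
Qed.

Lemma lim_ev (u : nat -> R) (l : R) : is_lim_seq u l -> forall eps, 0 < eps -> exists N, forall k, (N <= k)%nat -> Rabs (u k - l) < eps.
Proof.
  intros H eps He. apply is_lim_seq_spec in H. destruct (H (mkposreal eps He)) as [N HN]. exists N. auto.
Qed.

Lemma cauchy_lim (u : nat -> R) : (forall eps, 0 < eps -> exists N, forall k m, (N <= k)%nat -> (N <= m)%nat -> Rabs (u k - u m) < eps) ->
  is_lim_seq u (real (Lim_seq u)).
Proof.
  intros H. assert (ex_finite_lim_seq u).
  { apply ex_lim_seq_cauchy_corr. intros eps. apply H, cond_pos. }
  pose proof (Lim_seq_correct' u H0). destruct H0 as [l Hl].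
  rewrite (is_lim_seq_unique u l Hl) in *. simpl. auto.
Qed.

Lemma snd_le_Np n p i : (i <= n)%nat -> Rabs (snd p i) <= Np n p.
Proof. intros H. apply abs_le_sqrt. pose proof (term_le_sum (fun j => snd p j) i n H). lra. Qed.

Lemma lin_close a b t : 0 <= t <= 1 -> Rabs (a + t * (b - a) - b) <= Rabs (a - b).
Proof. intros Ht. replace (a + t * (b - a) - b) with ((1 - t) * (a - b)) by ring.
  rewrite Rabs_mult, (Rabs_right (1-t)) by lra. pose proof (Rabs_pos (a-b)). nra. Qed.

Lemma lin_abs a b t : 0 <= t <= 1 -> Rabs (a + t * (b - a)) <= Rabs a + Rabs (b - a).
Proof. intros Ht. eapply Rle_trans. apply Rabs_triang. rewrite Rabs_mult, (Rabs_right t) by lra.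
  pose proof (Rabs_pos (b-a)). nra. Qed.

Theorem proposition3p3 (n : nat) (f : nat -> R -> R) (eta : R -> R -> R) :
  (forall j, (1 <= j)%nat -> (j <= n)%nat -> smooth1 (f j)) ->
  smooth2 eta ->
  (forall x u, 0 < eta x u) ->
  (forall x, eta x 0 = 1) ->
  (forall x u, Scal eta x u < 0) ->
  (forall x u, Rabs (k_gamma eta x) <= sqrt (1 / 2 * Rabs (Scal eta x u))) ->
  (exists Lambda : R, forall x, Rabs (k_gamma eta x) <= Lambda) ->
  metric_complete n f eta.
Proof.
  intros Hf Hs Hpos H1 HS Hk [Lam HL] s Hc.
  assert (He := proj1 (eta_facts eta Hs)).
  assert (Hfc := fext_cont n f Hf).
  assert (HL0 : 0 <= Lam) by (eapply Rle_trans; [apply Rabs_pos| apply (HL 0)]).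
  assert (Hlow := eta_lower eta Lam Hs Hpos H1 HS Hk HL).
  destruct (Hc 1 Rlt_0_1) as [N0 HN0].
  set (R0 := Np n (s N0) + 1).
  assert (A1 : forall k, (N0 <= k)%nat -> Np n (s k) <= R0).
  { intros k Hk0. destruct (HN0 N0 k (le_n _) Hk0) as [c [Ha [Hj HL1]]].
    destruct (curve_Nc n f eta c (s N0) (s k) 0 Ha Hfc He Hj) as [_ H]; [lra|]. unfold R0; lra. }
  set (M := R0 + 1). set (C := exp (- Lam * M)).
  assert (HC : 0 < C) by apply exp_pos.
  assert (A2 : forall k m c, (N0 <= k)%nat -> admissible n c -> joins n c (s k) (s m) -> curve_length n f eta c < 1 ->
     (forall t, 0 <= t <= 1 -> Nc n c t <= M) /\ (forall t, 0 <= t <= 1 -> C <= eta (cx c t) (cv c 0%nat t))).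
  { intros k m c Hk0 Ha Hj HLc.
    assert (HN : forall t, 0 <= t <= 1 -> Nc n c t <= M).
    { intros t Ht. destruct (curve_Nc n f eta c (s k) (s m) t Ha Hfc He Hj Ht) as [H _].
      specialize (A1 k Hk0). unfold M; lra. }
    split; auto. intros t Ht. apply (curve_eta n c eta Lam M); auto. }
  set (xseq := fun k => fst (s k)).
  assert (Hx : is_lim_seq xseq (real (Lim_seq xseq))).
  { apply cauchy_lim. intros eps Heps.
    set (e' := Rmin (1/2) (C * eps / 2)).
    assert (He' : 0 < e') by (apply Rmin_pos; [lra| apply Rdiv_lt_0_compat; [apply Rmult_lt_0_compat|]; lra]).
    destruct (Hc e' He') as [N HN]. exists (max N N0). intros k m Hk0 Hm0.
    destruct (HN k m ltac:(lia) ltac:(lia)) as [c [Ha [Hj HLc]]].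
    assert (Q1 : e' <= 1/2) by apply Rmin_l. assert (Q2 : e' <= C * eps / 2) by apply Rmin_r.
    destruct (A2 k m c ltac:(lia) Ha Hj ltac:(lra)) as [_ Heta].
    pose proof (L2 n f eta c C 1 Ha Hfc He HC Heta ltac:(lra)) as Q3. rewrite Fc_1 in Q3.
    destruct Hj as [J0 [J1 _]]. rewrite J0, J1 in Q3. unfold xseq.
    rewrite Rabs_minus_sym.
    assert (Q4 : C * Rabs (fst (s m) - fst (s k)) < C * eps) by lra.
    apply Rmult_lt_reg_l in Q4; auto. }
  set (xs := real (Lim_seq xseq)). fold xs in Hx.
  destruct (fbound n f xs Hfc) as [d0 [B [Hd0 [HB0 HB]]]].
  destruct (lim_ev xseq xs Hx (d0/2) ltac:(lra)) as [N1 HN1].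
  set (K := 1 + 2 * M * B / C).
  assert (HM0 : 0 <= M).
  { unfold M, R0. pose proof (sqrt_pos (1 + sum_f_R0 (fun j => snd (s N0) j ^ 2) n)). unfold Np. lra. }
  assert (HK : 1 <= K).
  { unfold K. assert (0 <= 2 * M * B / C). apply Rmult_le_pos. nra. left; apply Rinv_0_lt_compat; auto. lra. }
  set (vseq := fun j k => snd (s k) j).
  assert (Hv : forall j, (j <= n)%nat -> is_lim_seq (vseq j) (real (Lim_seq (vseq j)))).
  { intros j Hj. apply cauchy_lim. intros eps Heps.
    set (e' := Rmin (1/2) (Rmin (C * d0 / 4) (eps / (2 * K)))).
    assert (He' : 0 < e').
    { apply Rmin_pos; [lra|]. apply Rmin_pos; apply Rdiv_lt_0_compat; try lra. apply Rmult_lt_0_compat; lra. }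
    assert (Q1 : e' <= 1/2) by apply Rmin_l.
    assert (Q2 : e' <= C * d0 / 4) by (eapply Rle_trans; [apply Rmin_r| apply Rmin_l]).
    assert (Q3 : e' <= eps / (2 * K)) by (eapply Rle_trans; [apply Rmin_r| apply Rmin_r]).
    destruct (Hc e' He') as [N HN]. exists (max (max N N0) N1). intros k m Hk0 Hm0.
    destruct (HN k m ltac:(lia) ltac:(lia)) as [c [Ha [Hj' HLc]]].
    destruct (A2 k m c ltac:(lia) Ha Hj' ltac:(lra)) as [HNc Heta].
    assert (HBc : forall t, 0 <= t <= 1 -> forall i, Rabs (fext n f i (cx c t)) <= B).
    { intros t Ht i. apply HB.
      pose proof (L2 n f eta c C t Ha Hfc He HC Heta Ht) as Q4.
      pose proof (Fc_bounds n f eta c t Ha Hfc He Ht) as Q5.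
      destruct Hj' as [J0 _]. rewrite J0 in Q4.
      assert (Q6 : C * Rabs (cx c t - fst (s k)) < C * (d0 / 4)) by lra.
      apply Rmult_lt_reg_l in Q6; auto.
      specialize (HN1 k ltac:(lia)). unfold xseq in HN1.
      replace (cx c t - xs) with ((cx c t - fst (s k)) + (fst (s k) - xs)) by ring.
      eapply Rle_lt_trans. apply Rabs_triang. lra. }
    pose proof (L3 n f eta c C M B j 1 Ha Hfc He HC Heta HNc HBc Hj ltac:(lra)) as Q4.
    fold K in Q4. rewrite Fc_1 in Q4.
    destruct Hj' as [_ [_ J]]. destruct (J j Hj) as [J0 J1]. rewrite J0, J1 in Q4.
    unfold vseq. rewrite Rabs_minus_sym.
    assert (Q5 : K * curve_length n f eta c <= K * e') by (apply Rmult_le_compat_l; lra).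
    assert (Q6 : K * e' <= K * (eps / (2 * K))) by (apply Rmult_le_compat_l; lra).
    replace (K * (eps / (2 * K))) with (eps / 2) in Q6 by (field; lra). lra. }
  set (vs := fun j => real (Lim_seq (vseq j))).
  destruct (eta_loc eta xs (vs 0%nat) He) as [d1 [Hd1 Hloc]].
  set (Hh := eta xs (vs 0%nat) + 1).
  set (K2 := sqrt (Hh^2 + INR (S n) * (1 + 2*M*B)^2)).
  assert (HK2 : 0 <= K2) by apply sqrt_pos.
  exists (xs, vs). intros eps Heps.
  set (e' := Rmin (1/2) (Rmin (d0/2) (Rmin (d1/2) (eps / (2*(K2+1)))))).
  assert (He' : 0 < e').
  { repeat apply Rmin_pos; try lra. apply Rdiv_lt_0_compat; lra. }
  assert (E1 : e' <= 1/2) by apply Rmin_l.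
  assert (E2 : e' <= d0/2) by (eapply Rle_trans; [apply Rmin_r| apply Rmin_l]).
  assert (E3 : e' <= d1/2) by (eapply Rle_trans; [apply Rmin_r| eapply Rle_trans; [apply Rmin_r| apply Rmin_l]]).
  assert (E4 : e' <= eps / (2*(K2+1))) by (eapply Rle_trans; [apply Rmin_r| eapply Rle_trans; [apply Rmin_r| apply Rmin_r]]).
  destruct (ev_fin (fun j k => Rabs (vseq j k - vs j) < e') n) as [N2 HN2].
  { intros j Hj. apply lim_ev; [apply Hv; auto | auto]. }
  destruct (lim_ev xseq xs Hx e' He') as [N3 HN3].
  exists (max (max N2 N3) N0). intros k Hk0.
  exists (lineC (s k) (xs, vs)). split; [apply lineC_adm|]. split; [apply lineC_joins|].
  apply Rle_lt_trans with (K2 * e').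
  2:{ assert (K2 * e' <= K2 * (eps / (2*(K2+1)))) by (apply Rmult_le_compat_l; lra).
      assert (K2 * (eps / (2*(K2+1))) < eps).
      { apply (Rmult_lt_reg_r (2*(K2+1))). lra. replace (K2 * (eps / (2 * (K2 + 1))) * (2 * (K2 + 1))) with (K2 * eps) by (field; lra). nra. }
      lra. }
  apply length_bound; auto. apply lineC_adm.
  intros t Ht.
  specialize (HN3 k ltac:(lia)). unfold xseq in HN3.
  assert (Hxt : Rabs (cx (lineC (s k) (xs, vs)) t - xs) < e').
  { simpl. eapply Rle_lt_trans. apply lin_close; auto. auto. }
  apply speed_bound with (M := M) (B := B).
  - lra.
  - apply Hpos.
  - apply Hloc. lra. simpl.
    eapply Rle_lt_trans. apply lin_close; auto. specialize (HN2 0%nat k ltac:(lia) ltac:(lia)). unfold vseq in HN2. lra.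
  - simpl. rewrite lin_Derive. rewrite Rabs_minus_sym. lra.
  - intros j Hj. simpl. rewrite lin_Derive. rewrite Rabs_minus_sym. specialize (HN2 j k Hj ltac:(lia)). unfold vseq in HN2. lra.
  - intros i Hi. simpl. eapply Rle_trans. apply lin_abs; auto.
    pose proof (snd_le_Np n (s k) i Hi). specialize (A1 k ltac:(lia)).
    specialize (HN2 i k Hi ltac:(lia)). unfold vseq in HN2. rewrite Rabs_minus_sym in HN2. unfold M. lra.
  - intros i. apply HB. lra.
Qed.
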